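(* Let $\delta\in(0,1/2)$, $\beta\in(0,1]$, and let $\mu\ge 0$, $\nu\ge 1$ be constants. Let $\mathcal A$ be an online bin packing algorithm such that on every input list $J$: (i) all bins in its packing that contain only small items, except at most $\mu$ of them, have total size at least $1-\delta$; and (ii) the number of bins in its packing containing at least one large item is at most $\nu|J_\ell|$ (where $J_\ell$ is the set of large items of $J$). Let $I$ be a list of $n$ items drawn independently from a common distribution on $(0,1]$ and let $J$ be the prefix of $I$ of length $\beta n$. Then, with probability tending to $1$ as $\mathbb E[\mathrm{Opt}(I)]\to\infty$, $$\mathcal A(J)\le \frac{2\beta\nu}{\delta(1-\delta)}\,\mathbb E[\mathrm{Opt}(I)]+o\big(\mathbb E[\mathrm{Opt}(I)]\big).$$
   Context: $\mathrm{Opt}(L)$ is the minimum number of unit-capacity bins needed to pack list $L$ and $\mathcal A(L)$ the number of bins used by $\mathcal A$. An item is large if its size is at least $\delta$ and small otherwise. *)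

(* Defs.v *)
From HB Require Import structures.
From mathcomp Require Import all_boot all_order all_algebra.
From mathcomp Require Import all_classical all_reals all_analysis.
Set Implicit Arguments. Unset Strict Implicit. Unset Printing Implicit Defensive.
Import Order.TTheory GRing.Theory Num.Theory.
Local Open Scope classical_set_scope.
Local Open Scope ring_scope.

Section BinPacking.
Variable R : realType.

(* A list of items is a seq R; a packing of L is a map f : nat -> nat
   assigning item i (i < size L) to bin f i. *)
Definition items_ok (L : seq R) : bool := all (fun x => 0 < x <= 1) L.

Definition load (L : seq R) (f : nat -> nat) (b : nat) : R :=
  \sum_(0 <= i < size L | f i == b) L`_i.

Definition valid_packing (L : seq R) (f : nat -> nat) : Prop :=
  forall b, load L f b <= 1.

Definition packable (L : seq R) (k : nat) : Prop :=
  exists f : nat -> nat,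
    (forall i, (i < size L)%N -> (f i < k)%N) /\ valid_packing L f.

Lemma packable_ex_bool (L : seq R) :
  (exists k, packable L k) -> exists k, `[< packable L k >].
Proof. by move=> [k Hk]; exists k; apply/asboolP. Qed.

(* Opt(L): minimum number of unit-capacity bins needed to pack L
   (0 by convention if L is not packable, which never happens for items in (0,1]) *)
Definition Opt (L : seq R) : nat :=
  match pselect (exists k, packable L k) with
  | left h => ex_minn (packable_ex_bool h)
  | right _ => 0%N
  end.

(* An (online) algorithm: alg L i is the bin to which item i of input L is assigned. *)
Definition bins_used (alg : seq R -> nat -> nat) (L : seq R) : seq nat :=
  undup [seq alg L i | i <- iota 0 (size L)].

Definition nbins (alg : seq R -> nat -> nat) (L : seq R) : nat :=
  size (bins_used alg L).

Definition bin_items (L : seq R) (f : nat -> nat) (b : nat) : seq R :=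
  [seq L`_i | i <- [seq i <- iota 0 (size L) | f i == b]].

Definition online_algorithm (alg : seq R -> nat -> nat) : Prop :=
  (forall L, items_ok L -> valid_packing L (alg L)) /\
  (forall L t i, (i < size L)%N -> alg (L ++ t) i = alg L i).

Definition is_small (delta x : R) : bool := x < delta.
Definition is_large (delta x : R) : bool := delta <= x.

Definition condition_i (delta mu : R) (alg : seq R -> nat -> nat) : Prop :=
  forall L, items_ok L ->
    (count (fun b => all (is_small delta) (bin_items L (alg L) b)
                     && (load L (alg L) b < 1 - delta))
           (bins_used alg L))%:R <= mu.

Definition condition_ii (delta nu : R) (alg : seq R -> nat -> nat) : Prop :=
  forall L, items_ok L ->
    (count (fun b => has (is_large delta) (bin_items L (alg L) b))
           (bins_used alg L))%:R
    <= nu * (count (is_large delta) L)%:R.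

Definition beta_prefix (beta : R) (L : seq R) : seq R :=
  take (Num.truncn (beta * (size L)%:R)) L.

End BinPacking.

Section Random.
Local Open Scope ereal_scope.
Variables (R : realType) (d : measure_display) (T : measurableType d).

Definition iid_items (P : probability T R) (X : nat -> T -> R) (n : nat) : Prop :=
  (forall i, measurable_fun setT (X i)) /\
  (forall i w, (0 < X i w <= 1)%R) /\
  (forall i (B : set R), measurable B -> P (X i @^-1` B) = P (X 0%N @^-1` B)) /\
  (forall B : nat -> set R, (forall i, measurable (B i)) ->
     P (\bigcap_(i in [set k | (k < n)%N]) (X i @^-1` B i))
     = \prod_(i < n) P (X i @^-1` B i)).

Definition rand_list (X : nat -> T -> R) (n : nat) (w : T) : seq R :=
  [seq X i w | i <- iota 0 n].

Definition EOpt (P : probability T R) (X : nat -> T -> R) (n : nat) : \bar R :=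
  \int[P]_w ((Opt (rand_list X n w))%:R)%:E.

End Random.

(* Main.v *)
Require Import Defs.
From HB Require Import structures.
From mathcomp Require Import all_boot all_order all_algebra.
From mathcomp Require Import all_classical all_reals all_analysis.
From mathcomp Require Import zify ring lra.
Import Order.TTheory GRing.Theory Num.Theory.
Local Open Scope classical_set_scope.
Local Open Scope ring_scope.

Section Ex.
Set Implicit Arguments.
Local Hint Resolve measurableT : core.
Context d (T : measurableType d) (R : realType) (P : probability T R).

Definition bdd (f : T -> R) := measurable_fun setT f /\ exists M : R, forall w, `|f w| <= M.
Definition Ex (f : T -> R) : R := fine (\int[P]_w (f w)%:E).

Lemma bdd_int f : bdd f -> P.-integrable setT (EFin \o f).
Proof.
move=> [mf [M hM]]; apply: measurable_bounded_integrable => //.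
  by apply: (le_lt_trans (probability_le1 P measurableT)); rewrite ltry.
exists M; split; first exact: num_real.
by move=> x Mx w _; apply: le_trans (hM w) _; apply: ltW.
Qed.

Lemma Ex_fin f : bdd f -> (\int[P]_w (f w)%:E)%E = (Ex f)%:E.
Proof.
move=> bf; rewrite /Ex fineK //.
exact: (integrable_fin_num measurableT (bdd_int bf)).
Qed.

Lemma bddD f g : bdd f -> bdd g -> bdd (fun w => f w + g w).
Proof.
move=> [mf [M hM]] [mg [N hN]]; split; first exact: measurable_realfun.measurable_funD.
exists (M + N) => w; apply: le_trans (ler_normD _ _) _; exact: lerD.
Qed.

Lemma bddZ c f : bdd f -> bdd (fun w => c * f w).
Proof.
move=> [mf [M hM]]; split; first exact: measurable_realfun.measurable_funM.
exists (`|c| * M) => w; rewrite normrM; exact: ler_wpM2l.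
Qed.

Lemma bddM f g : bdd f -> bdd g -> bdd (fun w => f w * g w).
Proof.
move=> [mf [M hM]] [mg [N hN]]; split; first exact: measurable_realfun.measurable_funM.
exists (M * N) => w; rewrite normrM; apply: ler_pM => //.
Qed.

Lemma bdd_cst c : bdd (fun _ => c).
Proof. by split; [exact: measurable_cst| exists `|c|]. Qed.

Lemma bdd_indic A : measurable A -> bdd (\1_A).
Proof.
move=> mA; split; first exact: measurable_realfun.measurable_indic.
by exists 1 => w; rewrite /indic; case: (w \in A) => /=; rewrite ?normr0 ?normr1.
Qed.

Lemma bdd_sum I (s : seq I) (F : I -> T -> R) : (forall i, bdd (F i)) ->
  bdd (fun w => \sum_(i <- s) F i w).
Proof.
move=> hF; elim: s => [|i s IH].
  by under eq_fun do rewrite big_nil; exact: bdd_cst.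
under eq_fun do rewrite big_cons; exact: bddD.
Qed.

Lemma ExD f g : bdd f -> bdd g -> Ex (fun w => f w + g w) = Ex f + Ex g.
Proof.
move=> bf bg; rewrite /Ex.
rewrite (_ : (fun w => _) = (EFin \o f) \+ (EFin \o g))%E; last first.
  by apply/funext => w.
rewrite integralD_EFin //; try exact: bdd_int.
rewrite fineD //; rewrite -/(Ex _) ?Ex_fin //.
Qed.

Lemma ExZ c f : bdd f -> Ex (fun w => c * f w) = c * Ex f.
Proof.
move=> bf; rewrite /Ex.
under eq_integral do rewrite EFinM.
rewrite integralZl //; last exact: bdd_int.
by rewrite Ex_fin.
Qed.

Lemma Ex_cst c : Ex (fun _ => c) = c.
Proof. rewrite /Ex integral_cst; last exact: measurableT. transitivity (fine (c%:E * 1%E)); last by rewrite mule1. by rewrite -(probability_setT P). Qed.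

Lemma Ex_indic A : measurable A -> Ex (\1_A) = fine (P A).
Proof. by move=> mA; rewrite /Ex integral_indic // setIT. Qed.

Lemma Ex_sum I (s : seq I) (F : I -> T -> R) : (forall i, bdd (F i)) ->
  Ex (fun w => \sum_(i <- s) F i w) = \sum_(i <- s) Ex (F i).
Proof.
move=> hF; elim: s => [|i s IH].
  by under eq_fun do rewrite big_nil; rewrite big_nil Ex_cst.
under eq_fun do rewrite big_cons; rewrite big_cons ExD ?IH //.
exact: bdd_sum.
Qed.

Lemma Ex_le f g : bdd f -> bdd g -> (forall w, f w <= g w) -> Ex f <= Ex g.
Proof.
move=> bf bg fg; rewrite -lee_fin -!Ex_fin //.
apply: le_integral; [exact: measurableT|exact: bdd_int|exact: bdd_int|].
by move=> w _; rewrite lee_fin.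
Qed.

End Ex.
Unset Implicit Arguments.
Section Indep.
Set Implicit Arguments.
Local Hint Resolve measurableT : core.
Context d (T : measurableType d) (R : realType) (P : probability T R).

Lemma indep2 (X : nat -> T -> R) n i j (B1 B2 : set R) :
  iid_items P X n -> (i < n)%N -> (j < n)%N -> i != j ->
  measurable B1 -> measurable B2 ->
  P (X i @^-1` B1 `&` X j @^-1` B2) = (P (X i @^-1` B1) * P (X j @^-1` B2))%E.
Proof.
move=> [_ [_ [_ hI]]] hi hj ij mB1 mB2.
pose B m := if m == i then B1 else if m == j then B2 else setT.
have mB m : measurable (B m).
  rewrite /B; case: (m == i); first exact: mB1.
  by case: (m == j); [exact: mB2|exact: measurableT].
have := hI B mB.
have -> : \bigcap_(m in [set k | (k < n)%N]) X m @^-1` B m = X i @^-1` B1 `&` X j @^-1` B2.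
  apply/seteqP; split => w.
    move=> h; split.
      by have := h i hi; rewrite /B eqxx.
    by have := h j hj; rewrite /B eqxx eq_sym (negbTE ij).
  move=> [h1 h2] m /= hm; rewrite /B /preimage /=.
  case: eqP => [->//|_]; case: eqP => [->//|//].
move=> ->.
rewrite (bigD1 (Ordinal hi)) //= (bigD1 (Ordinal hj)) /=; last first.
  by apply/eqP => -[] /eqP; rewrite eq_sym (negbTE ij).
rewrite big1 ?mule1.
  by rewrite /B eqxx eq_sym (negbTE ij) eqxx.
move=> m /andP [mi mj]; rewrite /B.
have -> : (nat_of_ord m == i) = false.
  by apply/negbTE; apply: contra mi => /eqP mi; apply/eqP/val_inj.
have -> : (nat_of_ord m == j) = false.
  by apply/negbTE; apply: contra mj => /eqP mj; apply/eqP/val_inj.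
rewrite preimage_setT; exact: probability_setT.
Qed.

Lemma ident (X : nat -> T -> R) n i (B : set R) :
  iid_items P X n -> measurable B -> P (X i @^-1` B) = P (X 0%N @^-1` B).
Proof. by move=> [_ [_ [h _]]] mB; exact: h. Qed.

End Indep.
Unset Implicit Arguments.


Lemma sum_lt_min {R : realType} n m :
  \sum_(0 <= l < n) ((l < m)%N%:R : R) = (minn m n)%:R.
Proof.
elim: n => [|n IH]; first by rewrite big_geq // minn0.
rewrite big_nat_recr //= IH -natrD; congr (_%:R).
case: (ltnP n m) => h /=; lia.
Qed.

Section Conc.
Set Implicit Arguments.
Local Hint Resolve measurableT : core.
Context d (T : measurableType d) (R : realType) (P : probability T R).
Variables (X : nat -> T -> R) (n : nat).
Hypothesis hX : iid_items P X n.
Hypothesis n0 : (0 < n)%N.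

Definition Aset i l : set T := X i @^-1` `[(l.+1)%:R / n%:R, +oo[.
Definition Z i w : R := n%:R^-1 * \sum_(0 <= l < n) \1_(Aset i l) w.

Lemma mA i l : measurable (Aset i l).
Proof. rewrite -[Aset i l]setTI; apply: (hX.1 i) => //; exact: measurable_itv. Qed.

Lemma Z_eq i w : Z i w = (Num.truncn (n%:R * X i w))%:R / n%:R.
Proof.
have nR : (0 : R) < n%:R by rewrite ltr0n.
have [X0 X1] := andP (hX.2.1 i w).
set m := Num.truncn _.
have mn : (m <= n)%N.
  rewrite /m truncn_le_nat; apply: le_lt_trans (_ : n%:R < n.+1%:R); last by rewrite ltr_nat.
  by rewrite -[leRHS]mulr1 ler_wpM2l // ltW.
rewrite /Z mulrC; congr (_ * _).
rewrite -[m](minn_idPl mn) -sum_lt_min; apply: eq_bigr => l _.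
rewrite indicE; congr (_%:R).
rewrite /m truncn_ge_nat; last by rewrite mulr_ge0 // ltW.
have -> : (w \in Aset i l) = ((l.+1)%:R / n%:R <= X i w).
  apply/idP/idP => [/set_mem|h]; last apply/mem_set; rewrite /Aset /= in_itv /= andbT //.
by rewrite ler_pdivrMr // mulrC.
Qed.


Lemma Z_prop i w : [/\ Z i w <= X i w, X i w <= Z i w + n%:R^-1, 0 <= Z i w & Z i w <= 1].
Proof.
have nR : (0 : R) < n%:R by rewrite ltr0n.
have [X0 X1] := andP (hX.2.1 i w).
have nX0 : 0 <= n%:R * X i w by rewrite mulr_ge0 // ltW.
have /andP[h1 h2] := Num.Theory.truncn_itv nX0.
rewrite Z_eq.
have Zle : (Num.truncn (n%:R * X i w))%:R / n%:R <= X i w.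
  by rewrite ler_pdivrMr // [X i w * _]mulrC.
split => //.
- rewrite -[Y in _ <= _ + Y]mul1r -mulrDl ler_pdivlMr // [X i w * _]mulrC.
  rewrite -natr1 in h2; exact: ltW.
- exact: le_trans Zle X1.
Qed.

Lemma bddZi i : bdd T R (Z i).
Proof. apply: bddZ; apply: bdd_sum => l; apply: bdd_indic; exact: mA. Qed.

Lemma pfin (B : set T) : measurable B -> P B = (fine (P B))%:E.
Proof. by move=> mB; rewrite fineK //; exact: fin_num_measure. Qed.

Lemma ExZi i : Ex P (Z i) = n%:R^-1 * \sum_(0 <= l < n) fine (P (Aset i l)).
Proof.
rewrite /Z ExZ; last by apply: bdd_sum => l; apply: bdd_indic; exact: mA.
rewrite Ex_sum; last by move=> l; apply: bdd_indic; exact: mA.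
by congr (_ * _); apply: eq_bigr => l _; rewrite Ex_indic //; exact: mA.
Qed.

Lemma ExZ0 i : Ex P (Z i) = Ex P (Z 0).
Proof.
rewrite !ExZi; congr (_ * _); apply: eq_bigr => l _.
by rewrite /Aset (ident _ hX) //; exact: measurable_itv.
Qed.

Lemma ExZZ i j : (i < n)%N -> (j < n)%N -> i != j ->
  Ex P (fun w => Z i w * Z j w) = Ex P (Z i) * Ex P (Z j).
Proof.
move=> hi hj ij.
have -> : (fun w => Z i w * Z j w) = (fun w => n%:R^-1 * \sum_(0 <= l < n)
    (n%:R^-1 * \sum_(0 <= l' < n) \1_(Aset i l `&` Aset j l') w)).
  apply/funext => w; rewrite /Z mulrA [_ * n%:R^-1]mulrC -!mulrA; congr (_ * _).
  rewrite big_distrl big_distrr /=; apply: eq_bigr => l _; congr (_ * _).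
  rewrite big_distrr /=; apply: eq_bigr => l' _.
  by rewrite indicI.
have mI l l' : measurable (Aset i l `&` Aset j l') by apply: measurableI; exact: mA.
rewrite ExZ; last by apply: bdd_sum => l; apply: bddZ; apply: bdd_sum => l'; exact: bdd_indic.
rewrite Ex_sum; last by move=> l; apply: bddZ; apply: bdd_sum => l'; exact: bdd_indic.
rewrite !ExZi -mulrA big_distrl /=; congr (_ * _); apply: eq_bigr => l _.
rewrite ExZ; last by apply: bdd_sum => l'; exact: bdd_indic.
rewrite Ex_sum; last by move=> l'; exact: bdd_indic.
rewrite mulrCA; congr (_ * _); rewrite big_distrr /=; apply: eq_bigr => l' _.
rewrite Ex_indic // /Aset (indep2 _ _ hX) //; try exact: measurable_itv.
by rewrite fineM //; apply: fin_num_measure; rewrite -/(Aset _ _); exact: mA.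
Qed.


Lemma Z_ge0 i w : 0 <= Z i w.
Proof. by case: (Z_prop i w). Qed.

Lemma ExZ2 i : Ex P (fun w => Z i w * Z i w) <= Ex P (Z i).
Proof.
apply: Ex_le; [apply: bddM; exact: bddZi|exact: bddZi|] => w.
case: (Z_prop i w) => _ _ h0 h1.
by rewrite -[leRHS]mulr1 ler_wpM2l.
Qed.

Definition q := Ex P (Z 0).

Lemma q_ge0 : 0 <= q.
Proof. by rewrite /q -(Ex_cst P 0); apply: Ex_le; [exact: bdd_cst|exact: bddZi|exact: Z_ge0]. Qed.

Definition Tk k w := \sum_(0 <= i < k) Z i w.

Lemma bddTk k : bdd T R (Tk k).
Proof. by apply: bdd_sum => i; exact: bddZi. Qed.

Lemma ExTk k : Ex P (Tk k) = k%:R * q.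
Proof.
rewrite /Tk Ex_sum; last exact: bddZi.
under eq_bigr do rewrite ExZ0.
by rewrite sumr_const_nat subn0 mulr_natl.
Qed.

Lemma sum_eq1 k i (c : R) : (i < k)%N -> \sum_(0 <= j < k) ((i == j)%:R * c) = c.
Proof.
move=> ik; rewrite (bigD1_seq i) ?mem_iota ?iota_uniq ?add0n ?subn0 //.
have -> : (i == i) = true by apply/eqP.
rewrite mul1r big1; first exact: addr0.
move=> j ji; have -> : (i == j) = false by apply/eqP => ij; rewrite ij eqxx in ji.
by rewrite mul0r.
Qed.

Lemma ExTk2 k : (k <= n)%N -> Ex P (fun w => Tk k w ^+ 2) <= (k%:R * q) ^+ 2 + k%:R * q.
Proof.
move=> kn.
have -> : (fun w => Tk k w ^+ 2) = (fun w => \sum_(0 <= i < k) \sum_(0 <= j < k) Z i w * Z j w).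
  apply/funext => w; rewrite expr2 /Tk big_distrl /=; apply: eq_bigr => i _.
  by rewrite big_distrr.
rewrite Ex_sum; last by move=> i; apply: bdd_sum => j; apply: bddM; exact: bddZi.
apply: (@le_trans _ _ (\sum_(0 <= i < k) \sum_(0 <= j < k) (q * q + (i == j)%:R * q))).
  rewrite big_seq_cond [leRHS]big_seq_cond; apply: ler_sum => i /andP[hi _].
  rewrite Ex_sum; last by move=> j; apply: bddM; exact: bddZi.
  rewrite big_seq_cond [leRHS]big_seq_cond; apply: ler_sum => j /andP[hj _].
  move: hi hj; rewrite !mem_iota !add0n !subn0 => /andP[_ hi] /andP[_ hj].
  have hi' := leq_trans hi kn; have hj' := leq_trans hj kn.
  case: (eqVneq i j) => [<-|ij].
    rewrite mul1r; apply: le_trans (ExZ2 i) _; rewrite ExZ0 -/q lerDr.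
    by rewrite mulr_ge0 // q_ge0.
  by rewrite ExZZ // !ExZ0 -/q mul0r addr0.
under eq_bigr => i _ do rewrite big_split /= sumr_const_nat subn0.
rewrite big_split /= sumr_const_nat subn0.
rewrite (@eq_big_nat _ _ _ 0 k _ (fun _ => q)); last by move=> i /andP[_ hi]; exact: sum_eq1.
rewrite sumr_const_nat subn0 -mulrnA.
rewrite -[q * q *+ (k*k)]mulr_natl -[q *+ k]mulr_natl natrM.
by rewrite expr2 mulrACA.
Qed.

Lemma ExVar k : (k <= n)%N ->
  Ex P (fun w => (Tk k w - k%:R * q) ^+ 2) <= k%:R * q.
Proof.
move=> kn; set a := k%:R * q.
have -> : (fun w => (Tk k w - a) ^+ 2) = (fun w => Tk k w ^+ 2 + ((- (2 * a)) * Tk k w + a ^+ 2)).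
  by apply/funext => w; rewrite sqrrB; ring.
rewrite ExD; last 2 first.
- by apply: bddM; exact: bddTk.
- by apply: bddD; [apply: bddZ; exact: bddTk|exact: bdd_cst].
rewrite ExD; last 2 first.
- by apply: bddZ; exact: bddTk.
- exact: bdd_cst.
rewrite ExZ; last exact: bddTk.
rewrite Ex_cst ExTk -/a.
have := ExTk2 k kn; rewrite -/a => h.
lra.
Qed.

Lemma cheb (f : T -> R) a t : bdd T R f -> 0 < t ->
  t ^+ 2 * fine (P (f @^-1` `[a + t, +oo[)) <= Ex P (fun w => (f w - a) ^+ 2).
Proof.
move=> bf t0.
have mB : measurable (f @^-1` `[a + t, +oo[).
  rewrite -[_ @^-1` _]setTI; apply: bf.1 => //; exact: measurable_itv.
rewrite -Ex_indic // -ExZ; last exact: bdd_indic.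
apply: Ex_le; [apply: bddZ; exact: bdd_indic| |].
  by apply: bddM; apply: bddD => //; exact: bdd_cst.
move=> w; rewrite indicE.
case: (boolP (w \in _)) => h; last by rewrite mulr0 sqr_ge0.
move/set_mem: h; rewrite /= in_itv /= andbT => h.
rewrite mulr1 ler_sqr ?nnegrE; [lra|exact: ltW|lra].
Qed.

End Conc.
Unset Implicit Arguments.


Section Det.
Variable R : realType.

Lemma sum_ind (I : eqType) (s : seq I) (x : I) (c : R) :
  \sum_(j <- s) ((x == j)%:R * c) = (count_mem x s)%:R * c.
Proof.
elim: s => [|y s IH]; first by rewrite big_nil mul0r.
by rewrite big_cons IH /= natrD mulrDl eq_sym.
Qed.

Lemma loadE (L : seq R) f b :
  load L f b = \sum_(0 <= i < size L) ((f i == b)%:R * L`_i).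
Proof.
rewrite /load big_mkcond /=; apply: eq_bigr => i _.
by case: (f i == b); rewrite ?mul1r ?mul0r.
Qed.

Lemma sumL_nth (L : seq R) : \sum_(x <- L) x = \sum_(0 <= i < size L) L`_i.
Proof. exact: (big_nth 0). Qed.

Lemma load_ge0 (L : seq R) f b : items_ok L -> 0 <= load L f b.
Proof.
move=> hL; rewrite /load; apply: sumr_ge0 => i _.
have /allP := hL => /(_ (L`_i)).
case: (ltnP i (size L)) => hi.
  by move=> /(_ (mem_nth 0 hi)) /andP[h _]; exact: ltW.
by rewrite nth_default.
Qed.

Lemma sum_loads (L : seq R) f (s : seq nat) : uniq s -> items_ok L ->
  \sum_(b <- s) load L f b <= \sum_(x <- L) x.
Proof.
move=> us hL; rewrite sumL_nth.
under eq_bigr do rewrite loadE.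
rewrite exchange_big /=; apply: ler_sum => i _.
rewrite sum_ind count_uniq_mem //.
have Li : 0 <= L`_i.
  case: (ltnP i (size L)) => hi; last by rewrite nth_default.
  by have /allP /(_ _ (mem_nth 0 hi)) /andP[h _] := hL; exact: ltW.
by case: (f i \in s); rewrite ?mul1r ?mul0r.
Qed.

Lemma count_split (T : Type) (a b : pred T) (s : seq T) :
  count a s = count (fun x => a x && b x) s + count (fun x => a x && ~~ b x) s.
Proof. elim: s => [|x s IH] //=; rewrite IH; case: (a x); case: (b x) => /=; lia. Qed.

Lemma count_sum_le (I : Type) (s : seq I) (a : pred I) (F : I -> R) c :
  (forall x, a x -> c <= F x) -> (count a s)%:R * c <= \sum_(x <- s | a x) F x.
Proof.
move=> h; elim: s => [|x s IH]; first by rewrite big_nil mul0r.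
rewrite big_cons /=; case: (boolP (a x)) => ax /=.
  by rewrite natrD mulrDl mul1r; apply: lerD => //; exact: h.
by rewrite add0n.
Qed.

Lemma large_bound (delta : R) (L : seq R) : 0 < delta -> items_ok L ->
  delta * (count (is_large delta) L)%:R <= \sum_(x <- L) x.
Proof.
move=> d0; elim: L => [|x L IH] /=; first by rewrite big_nil mulr0.
move=> /andP[/andP[x0 x1] hL]; rewrite big_cons natrD mulrDr.
apply: lerD; last exact: IH.
by rewrite /is_large; case: (boolP (delta <= x)) => h; rewrite ?mulr1 ?mulr0 // ltW.
Qed.

Lemma det_bound (alg : seq R -> nat -> nat) (delta mu nu : R) (J : seq R) :
  0 < delta < 1 -> 0 <= nu -> condition_i delta mu alg -> condition_ii delta nu alg ->
  items_ok J ->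
  (nbins alg J)%:R <= mu + ((1 - delta)^-1 + nu / delta) * \sum_(x <- J) x.
Proof.
move=> /andP[d0 d1] nu0 hi hii hJ.
set S := \sum_(x <- J) x.
set s := bins_used alg J.
set hasL := fun b => has (is_large delta) (bin_items J (alg J) b).
set lowl := fun b => load J (alg J) b < 1 - delta.
have us : uniq s by exact: undup_uniq.
have sz : size s = (count hasL s + (count (fun b => ~~ hasL b && lowl b) s
   + count (fun b => ~~ hasL b && ~~ lowl b) s))%N.
  by rewrite -(count_predC hasL) (count_split _ (predC hasL) lowl).
have c1 : (count (fun b => ~~ hasL b && lowl b) s)%:R <= mu.
  apply: le_trans (hi J hJ); rewrite ler_nat; apply: eq_leq; apply: eq_count => b.
  congr (_ && _); rewrite /hasL -all_predC; apply: eq_all => x /=.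
  by rewrite /is_small /is_large ltNge.
have c2 : (count hasL s)%:R <= nu / delta * S.
  apply: le_trans (hii J hJ) _.
  rewrite -mulrA; apply: ler_wpM2l => //.
  by rewrite mulrC ler_pdivlMr // mulrC; exact: large_bound.
have c3 : (count (fun b => ~~ hasL b && ~~ lowl b) s)%:R * (1 - delta) <= S.
  have := count_sum_le _ s (fun b => ~~ hasL b && ~~ lowl b)
     (fun b => load J (alg J) b) (1 - delta).
  move=> /(_ _) h; apply: le_trans (h _) _.
    by move=> b /andP[_]; rewrite /lowl -leNgt.
  apply: le_trans _ (sum_loads J (alg J) s us hJ).
  rewrite [leRHS](bigID (fun b => ~~ hasL b && ~~ lowl b)) /= lerDl.
  by apply: sumr_ge0 => b _; exact: load_ge0.
rewrite /nbins -/s sz !natrD mulrDl addrCA addrA.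
have c3' : (count (fun b => ~~ hasL b && ~~ lowl b) s)%:R <= (1 - delta)^-1 * S.
  by rewrite mulrC ler_pdivlMr ?subr_gt0.
lra.
Qed.

Lemma sum_eqF k i (F : nat -> R) : (i < k)%N -> \sum_(0 <= j < k) ((i == j)%:R * F j) = F i.
Proof.
move=> ik; rewrite (bigD1_seq i) ?mem_iota ?iota_uniq ?add0n ?subn0 //.
have -> : (i == i) = true by apply/eqP.
rewrite mul1r big1; first exact: addr0.
move=> j ji; have -> : (i == j) = false by apply/eqP => ij; rewrite ij eqxx in ji.
by rewrite mul0r.
Qed.

Lemma item_bound (L : seq R) i : items_ok L -> 0 <= L`_i <= 1.
Proof.
move=> hL; case: (ltnP i (size L)) => hi; last by rewrite nth_default // lexx ler01.
by have /allP /(_ _ (mem_nth 0 hi)) /andP[h1 h2] := hL; rewrite h2 ltW.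
Qed.

Lemma packable_size (L : seq R) : items_ok L -> packable L (size L).
Proof.
move=> hL; exists id; split => // b; rewrite loadE.
case: (ltnP b (size L)) => hb.
  under eq_bigr do rewrite eq_sym.
  by rewrite sum_eqF //; case/andP: (item_bound L b hL).
rewrite big1_seq // => i; rewrite mem_iota => /andP[_ hi].
have -> : (i == b) = false by apply/eqP => ib; move: hi; rewrite ib add0n subn0 ltnNge hb.
by rewrite mul0r.
Qed.

Lemma Opt_spec (L : seq R) : items_ok L -> packable L (Opt L).
Proof.
move=> hL; rewrite /Opt; case: pselect => [h|h]; last first.
  by exfalso; apply: h; exists (size L); exact: packable_size.
by case: ex_minnP => k /asboolP.
Qed.

Lemma Opt_ge (L : seq R) : items_ok L -> \sum_(x <- L) x <= (Opt L)%:R.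
Proof.
move=> hL; have [f [hf hv]] := Opt_spec L hL.
rewrite sumL_nth.
have -> : \sum_(0 <= i < size L) L`_i =
    \sum_(0 <= i < size L) \sum_(0 <= b < Opt L) ((f i == b)%:R * L`_i).
  rewrite big_seq_cond [RHS]big_seq_cond; apply: eq_bigr => i /andP[hi _].
  rewrite (sum_eqF _ _ (fun _ => L`_i)) //; apply: hf.
  by move: hi; rewrite mem_iota add0n subn0 => /andP[].
rewrite exchange_big /=.
apply: le_trans (_ : \sum_(0 <= b < Opt L) (1 : R) <= _).
  apply: ler_sum => b _; rewrite -loadE; exact: hv.
by rewrite sumr_const_nat subn0.
Qed.

Lemma Opt_nil : Opt ([::] : seq R) = 0%N.
Proof.
rewrite /Opt; case: pselect => [h|//].
case: ex_minnP => k _ /(_ 0%N) h0; apply/eqP; rewrite -leqn0; apply: h0.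
apply/asboolP; exists id; split => // b.
by rewrite /load big_geq.
Qed.

End Det.
Unset Implicit Arguments.


Lemma int_mono d (T : measurableType d) (R : realType) (P : probability T R)
  (f g : T -> \bar R) : (forall w, (0 <= f w)%E) -> (forall w, (f w <= g w)%E) ->
  (\int[P]_w f w <= \int[P]_w g w)%E.
Proof.
move=> f0 fg; have g0 w : (0 <= g w)%E := le_trans (f0 w) (fg w).
rewrite !ge0_integralTE //; apply: le_ereal_sup => _ [h hf <-]; exists h => //.
by move=> w; exact: le_trans (hf w) (fg w).
Qed.

Section Inst.
Set Implicit Arguments.
Context d (T : measurableType d) (R : realType) (P : probability T R).
Variables (X : nat -> T -> R) (n : nat).
Hypothesis hX : iid_items P X n.
Hypothesis n0 : (0 < n)%N.

Lemma items_rand m w : items_ok (rand_list X m w).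
Proof. by rewrite /items_ok /rand_list all_map; apply/allP => i _; exact: hX.2.1. Qed.

Lemma sum_rand m w : \sum_(x <- rand_list X m w) x = \sum_(0 <= i < m) X i w.
Proof. by rewrite /rand_list big_map /index_iota subn0. Qed.

Lemma Tk_le_sum k w : Tk T R X n k w <= \sum_(0 <= i < k) X i w.
Proof. by apply: ler_sum => i _; case: (Z_prop hX n0 i w). Qed.

Lemma sum_le_Tk k w : (k <= n)%N -> \sum_(0 <= i < k) X i w <= Tk T R X n k w + 1.
Proof.
move=> kn.
apply: (@le_trans _ _ (\sum_(0 <= i < k) (Z T R X n i w + n%:R^-1))).
  by apply: ler_sum => i _; case: (Z_prop hX n0 i w).
rewrite big_split /= sumr_const_nat subn0 lerD2l -[n%:R^-1 *+ k]mulr_natl.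
by rewrite ler_pdivrMr ?ltr0n // mul1r ler_nat.
Qed.

Lemma Tk_ge0 k w : 0 <= Tk T R X n k w.
Proof. by apply: sumr_ge0 => i _; case: (Z_prop hX n0 i w). Qed.

Lemma nq_le : ((n%:R * q P X n)%:E <= EOpt P X n)%E.
Proof.
rewrite -(ExTk hX) -Ex_fin; last exact: (bddTk hX).
apply: int_mono => w /=; first by rewrite lee_fin Tk_ge0.
rewrite lee_fin; apply: le_trans (Tk_le_sum _ _) _.
by rewrite -sum_rand; apply: Opt_ge; exact: items_rand.
Qed.

End Inst.
Unset Implicit Arguments.


Lemma EOpt0 d (T : measurableType d) (R : realType) (P : probability T R) X :
  EOpt P X 0 = 0%E.
Proof.
rewrite /EOpt /rand_list /=.
under eq_integral do rewrite Opt_nil.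
by rewrite integral_cst // mul0e.
Qed.

Lemma prefix_rand (R : realType) d (T : measurableType d) (X : nat -> T -> R) (beta : R) N w :
  (Num.truncn (beta * N%:R) <= N)%N ->
  beta_prefix beta (rand_list X N w) = rand_list X (Num.truncn (beta * N%:R)) w.
Proof.
move=> kN; rewrite /beta_prefix /rand_list size_map size_iota -map_take take_iota.
by rewrite (minn_idPl kN).
Qed.

Lemma eqle (R : realType) (x y : R) : x = y -> x <= y.
Proof. by move=> ->. Qed.

Theorem lemmaC1 (R : realType) (delta beta mu nu : R)
    (alg : seq R -> nat -> nat) :
  0 < delta < 1 / 2 -> 0 < beta <= 1 -> 0 <= mu -> 1 <= nu ->
  online_algorithm alg -> condition_i delta mu alg -> condition_ii delta nu alg ->
  forall eps : R, 0 < eps ->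
  exists M : R,
    forall (d : measure_display) (T : measurableType d) (P : probability T R)
           (X : nat -> T -> R) (n : nat),
      iid_items P X n ->
      (M%:E <= EOpt P X n)%E ->
      exists E : set T,
        measurable E /\ ((1 - eps)%:E <= P E)%E /\
        forall w, E w ->
          (((nbins alg (beta_prefix beta (rand_list X n w)))%:R)%:E
           <= (2 * beta * nu / (delta * (1 - delta)) + eps)%:E * EOpt P X n)%E.
Proof.
move=> /andP[d0 d1] /andP[b0 b1] mu0 nu1 _ hi hii eps e0.
have d1' : delta < 1 by lra.
have dd0 : 0 < 1 - delta by lra.
set C := (1 - delta)^-1 + nu / delta.
have C0 : 0 < C by rewrite addr_gt0 // ?invr_gt0 // divr_gt0 //; lra.
set K := 2 * nu / (delta * (1 - delta)).
have CK : C <= K.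
  rewrite /C /K ler_pdivlMr ?mulr_gt0 //.
  have -> : ((1 - delta)^-1 + nu / delta) * (delta * (1 - delta)) = delta + nu * (1 - delta).
    by field; apply/andP; split; apply: lt0r_neq0 => //; lra.
  nra.
set eta := eps / (2 * C).
have eta0 : 0 < eta by rewrite divr_gt0 // mulr_gt0.
have Ceta : C * eta = eps / 2 by rewrite /eta; field; apply: lt0r_neq0.
set M := 2 * (mu + C) / eps + 1 / (eta ^+ 2 * eps) + 1.
have M1 : 2 * (mu + C) / eps <= M.
  have : 0 <= 1 / (eta ^+ 2 * eps) by rewrite divr_ge0 // mulr_ge0 // ltW // exprn_gt0.
  rewrite /M; lra.
have M2 : 1 / (eta ^+ 2 * eps) <= M.
  have : 0 <= 2 * (mu + C) / eps by rewrite divr_ge0 // ?mulr_ge0 //; lra.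
  rewrite /M; lra.
have M0 : 0 < M.
  have : 0 <= 2 * (mu + C) / eps by rewrite divr_ge0 // ?mulr_ge0 //; lra.
  have : 0 <= 1 / (eta ^+ 2 * eps) by rewrite divr_ge0 // mulr_ge0 // ltW // exprn_gt0.
  rewrite /M; lra.
exists M => dm T P X n hX hM.
case: n hX hM => [|n] hX hM.
  by move: hM; rewrite EOpt0 lee_fin => hM; lra.
set N := n.+1.
have n0 : (0 < N)%N by [].
set k := Num.truncn (beta * N%:R).
have NR : (0 : R) <= N%:R by rewrite ler0n.
have kN : (k <= N)%N.
  rewrite /k truncn_le_nat; apply: le_lt_trans (_ : N%:R < N.+1%:R); last by rewrite ltr_nat.
  by rewrite -[leRHS]mul1r ler_wpM2r.
have kb : k%:R <= beta * N%:R by rewrite /k truncn_le mulr_ge0 // ltW.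
have hq := q_ge0 hX n0.
have hnq := nq_le hX n0.
set a := k%:R * q P X N.
have Kpos : 0 < 2 * beta * nu / (delta * (1 - delta)) + eps.
  by rewrite addr_gt0 // divr_gt0 ?mulr_gt0 //; lra.
case hE : (EOpt P X N) hM hnq => [e| |] hM hnq; last first.
  by exfalso; move: hM; rewrite leNgt => /negP; apply; exact: ltNyr.
  exists setT; split; first exact: measurableT.
  split.
    have -> : P [set: T] = 1%E by exact: probability_setT.
    by rewrite lee_fin; lra.
  by move=> w _; rewrite mulry gtr0_sg // mul1e leey.
rewrite lee_fin in hM; rewrite lee_fin in hnq.
have e0' : 0 < e by lra.
have ab : a <= beta * e.
  apply: (@le_trans _ _ (beta * N%:R * q P X N)); first by rewrite /a ler_wpM2r.
  by rewrite -mulrA ler_wpM2l // ltW.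
set t := eta * e.
have t0 : 0 < t by rewrite mulr_gt0.
set Bad := Tk T R X N k @^-1` `[a + t, +oo[.
have mBad : measurable Bad.
  rewrite -[Bad]setTI; apply: (bddTk hX k).1 => //; exact: measurable_itv.
have hcheb := cheb P a t (bddTk hX k) t0.
have hvar := ExVar hX n0 k kN.
have pB0 : 0 <= fine (P Bad) by apply: fine_ge0; exact: measure_ge0.
have pB : fine (P Bad) <= eps.
  have h0 : t ^+ 2 * fine (P Bad) <= e.
    apply: le_trans hcheb _; apply: le_trans hvar _.
    apply: le_trans ab _; rewrite -[leRHS]mul1r ler_wpM2r //; exact: ltW.
  have h1 : eta ^+ 2 * e * fine (P Bad) <= 1.
    rewrite -(ler_pM2l e0') mulr1; apply: le_trans h0; rewrite /t; apply: eqle.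
    by rewrite /eta; ring.
  have h2 : 1 <= eta ^+ 2 * e * eps.
    have eta2 : 0 < eta ^+ 2 * eps by rewrite mulr_gt0 // exprn_gt0.
    move: M2 => /le_trans /(_ hM); rewrite ler_pdivrMr //.
    by move=> h; apply: le_trans h _; apply: eqle; ring.
  have u0 : 0 < eta ^+ 2 * e by rewrite mulr_gt0 // exprn_gt0.
    move: h1 h2 u0; set u := eta ^+ 2 * e => h1 h2 u0.
  rewrite leNgt; apply/negP => hlt.
  have : u * eps < u * fine (P Bad) by rewrite ltr_pM2l.
  lra.
exists (~` Bad); split; first exact: measurableC.
split.
  rewrite probability_setC // -[P Bad]fineK ?fin_num_measure // -EFinB lee_fin; lra.
move=> w nB.
have hT : Tk T R X N k w < a + t.
  rewrite ltNge; apply/negP => h; apply: nB; rewrite /Bad /preimage /= in_itv /= h.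
  done.
rewrite prefix_rand // -EFinM lee_fin.
have dd1 : 0 < delta < 1 by rewrite d0 d1'.
have nu0 : 0 <= nu by lra.
have hdet := det_bound _ alg delta mu nu _ dd1 nu0 hi hii (items_rand hX k w).
rewrite sum_rand -/C in hdet.
have hS := sum_le_Tk hX n0 k w kN.
set SJ := \sum_(0 <= i < k) X i w in hdet hS.
have F2 : C * SJ <= beta * (C * e) + eps / 2 * e + C.
  apply: le_trans (_ : C * SJ <= C * (beta * e + eta * e + 1)) _.
    by apply: ler_wpM2l; [exact: ltW| rewrite /t in hT; lra].
  apply: eqle; rewrite -Ceta; ring.
have F3 : beta * (C * e) <= beta * (K * e).
  by apply: ler_wpM2l; [exact: ltW| apply: ler_wpM2r => //; exact: ltW].
have F4 : 2 * (mu + C) <= e * eps.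
  by move: M1 => /le_trans /(_ hM); rewrite ler_pdivrMr.
have -> : 2 * beta * nu / (delta * (1 - delta)) = beta * K by rewrite /K; ring.
rewrite mulrDl.
have -> : beta * K * e = beta * (K * e) by ring.
lra.
Qed.
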